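(* Fix a propositional language $\mathcal{L}$, a set $\Omega$ and a sound truth valuation $t:\mathcal{L}\to2^\Omega$. Let $A\subseteq S$ be a finite set of strategies. Then $s\in A$ is rationalizable via a likelihood function if and only if $t^m_\bullet(s)$ is pointwise undominated in the convex hull $co(t^m_\bullet(A))$.
   Context: Let $\mathbb{P}$ be a set of propositional variables containing distinguished $\mathbf{T}$, $\mathbf{F}$, and $\mathcal{L}$ the language generated by $\neg,\land,\lor$. A truth valuation $t:\mathcal{L}\to2^\Omega$ (with $t(\mathbf{T})=\Omega,t(\mathbf{F})=\emptyset$) is sound if it is exact (logically equivalent statements have equal images), monotone ($\phi\implies\psi\Rightarrow t(\phi)\subseteq t(\psi)$), symmetric ($t(\neg\phi)=\Omega\setminus t(\phi)$) and $\land$-distributive ($t(\phi\land\psi)=t(\phi)\cap t(\psi)$); then $t(\mathcal{L})$ is a field. A likelihood appraisal (likelihood function) on $(\Omega,t(\mathcal{L}))$ is any $\lambda:t(\mathcal{L})\to[0,1]$ with $\lambda(\emptyset)=0,\lambda(\Omega)=1$; $\int x\,\mathrm{d}\lambda=\int_{-\infty}^\infty\lambda(\{x\ge r\})\mathrm{d}r$. A strategy is a finitely supported $s:\mathcal{L}\to\mathbb{R}$; $S$ is the set of strategies; $t_\circ(s)=\sum_\phi s(\phi)\mathbf{1}_{t(\phi)}$. $s\in A$ is rationalizable via a likelihood function if there is a likelihood appraisal $\lambda$ on $(\Omega,t(\mathcal{L}))$ with $\int t_\circ(s)\mathrm{d}\lambda\ge\int t_\circ(s')\mathrm{d}\lambda$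 for all $s'\in A$. Maximal model relative to $(\Omega,t)$: for each $B\in t(\mathcal{L})\setminus\{\Omega,\emptyset\}$ let $\Omega^m_B=\{0_B,1_B\}$, $\Omega^m=\prod_B\Omega^m_B$, and $t^m(\phi)=\{\omega\in\Omega^m:\omega_{t(\phi)}=1_{t(\phi)}\}$ when $t(\phi)\notin\{\Omega,\emptyset\}$, $t^m(\phi)=\Omega^m$ when $t(\phi)=\Omega$, $t^m(\phi)=\emptyset$ when $t(\phi)=\emptyset$. For a strategy $s$, with $x=t_\circ(s)$ of image $\{\alpha_1>\dots>\alpha_n\}$, $\alpha_{n+1}=0$, and $\phi_k$ any statement with $t(\phi_k)=x^{-1}(\{\alpha_1,\dots,\alpha_k\})$, set $t^m_\bullet(s)=\sum_{k=1}^n(\alpha_k-\alpha_{k+1})\mathbf{1}_{t^m(\phi_k)}:\Omega^m\to\mathbb{R}$ (independent of the choice of $\phi_k$). Convex hull is taken pointwise; ''pointwise undominated'' is the Wald–Pearce notion: no element $y$ of $co(t^m_\bullet(A))$ satisfies $y(\omega)>t^m_\bullet(s)(\omega)$ for every $\omega\in\Omega^m$. *)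

(* Defs.v *)
From HB Require Import structures.
From mathcomp Require Import all_boot all_order all_algebra.
From mathcomp Require Import finmap.
From mathcomp Require Import boolp classical_sets functions cardinality fsbigop reals.
Unset Printing Implicit Defensive.
Import Order.TTheory GRing.Theory Num.Theory.
Local Open Scope classical_set_scope.
Local Open Scope ring_scope.

Inductive lform (P : Type) : Type :=
  | Var : P -> lform P
  | Neg : lform P -> lform P
  | And : lform P -> lform P -> lform P
  | Or  : lform P -> lform P -> lform P.
Arguments Var {P}. Arguments Neg {P}. Arguments And {P}. Arguments Or {P}.

HB.instance Definition _ (P : Type) := gen_eqMixin (lform P).
HB.instance Definition _ (P : Type) := gen_choiceMixin (lform P).

Fixpoint beval {P : Type} (v : P -> bool) (f : lform P) : bool :=
  match f with
  | Var p => v p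
  | Neg g => ~~ beval v g
  | And g h => beval v g && beval v h
  | Or g h => beval v g || beval v h
  end.

Definition admissible {P : Type} (T F : P) (v : P -> bool) : Prop :=
  v T = true /\ v F = false.

Definition implies {P : Type} (T F : P) (phi psi : lform P) : Prop :=
  forall v, admissible T F v -> beval v phi -> beval v psi.

Definition lequiv {P : Type} (T F : P) (phi psi : lform P) : Prop :=
  implies T F phi psi /\ implies T F psi phi.

Definition truth_valuation {P Omega : Type} (T F : P) (t : lform P -> set Omega) : Prop :=
  t (Var T) = setT /\ t (Var F) = set0.

Definition sound {P Omega : Type} (T F : P) (t : lform P -> set Omega) : Prop :=
  [/\ (forall phi psi, lequiv T F phi psi -> t phi = t psi),
      (forall phi psi, implies T F phi psi -> t phi `<=` t psi),
      (forall phi, t (Neg phi) = ~` t phi)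
    & (forall phi psi, t (And phi psi) = t phi `&` t psi)].

Definition strategy {R : realType} {P : Type} (s : lform P -> R) : Prop :=
  finite_set [set phi | s phi != 0].

Definition tcirc {R : realType} {P Omega : Type} (t : lform P -> set Omega)
  (s : lform P -> R) : Omega -> R :=
  fun w => \sum_(phi \in [set phi | s phi != 0]) s phi * (w \in t phi)%:R.

Definition values {R : realType} {Omega : Type} (x : Omega -> R) : seq R :=
  sort (fun a b => b <= a) (enum_fset (fset_set (range x))).

Fixpoint layer_sum {R : realType} {Omega : Type} (g : set Omega -> R)
  (x : Omega -> R) (vs : seq R) : R :=
  match vs with
  | [::] => 0
  | a :: rest => (a - head 0 rest) * g [set w | a <= x w] + layer_sum g x rest
  end.

Definition choquet {R : realType} {Omega : Type} (lambda : set Omega -> R)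
  (x : Omega -> R) : R :=
  layer_sum lambda x (values x).

(* likelihood appraisal on (Omega, t(L)) (values off t(L) are irrelevant) *)
Definition likelihood {R : realType} {P Omega : Type} (t : lform P -> set Omega)
  (lambda : set Omega -> R) : Prop :=
  [/\ lambda set0 = 0, lambda setT = 1
    & forall phi, 0 <= lambda (t phi) <= 1].

Definition rationalizable {R : realType} {P Omega : Type} (t : lform P -> set Omega)
  (A : set (lform P -> R)) (s : lform P -> R) : Prop :=
  exists lambda, likelihood t lambda /\
    forall s', A s' -> choquet lambda (tcirc t s') <= choquet lambda (tcirc t s).

Definition mindex {P Omega : Type} (t : lform P -> set Omega) (B : set Omega) : Prop :=
  (exists phi, t phi = B) /\ B <> setT /\ B <> set0.

Definition Omegam {P Omega : Type} (t : lform P -> set Omega) : Type :=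
  {B : set Omega | mindex t B} -> bool.

Definition tmS {P Omega : Type} (t : lform P -> set Omega) (B : set Omega)
  : set (Omegam t) :=
  fun w => B = setT \/ (B <> set0 /\ exists h : mindex t B, w (exist _ B h) = true).

Definition tm {P Omega : Type} (t : lform P -> set Omega) (phi : lform P)
  : set (Omegam t) := tmS t (t phi).

(* t^m_bullet(s) = sum_k (alpha_k - alpha_{k+1}) 1_{t^m(phi_k)},
   t(phi_k) = {x >= alpha_k}, x = t_o(s) *)
Definition tmbullet {R : realType} {P Omega : Type} (t : lform P -> set Omega)
  (s : lform P -> R) : Omegam t -> R :=
  fun w => layer_sum (fun B => (w \in tmS t B)%:R) (tcirc t s) (values (tcirc t s)).

Definition in_hull {R : realType} {P Omega : Type} (t : lform P -> set Omega)
  (A : set (lform P -> R)) (y : Omegam t -> R) : Prop :=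
  exists l : seq ((lform P -> R) * R),
    [/\ forall p, p \in l -> A p.1 /\ 0 <= p.2,
        \sum_(p <- l) p.2 = 1
      & forall w, y w = \sum_(p <- l) p.2 * tmbullet t p.1 w].

Definition pointwise_undominated {R : realType} {P Omega : Type} (t : lform P -> set Omega)
  (A : set (lform P -> R)) (s : lform P -> R) : Prop :=
  ~ exists y, in_hull t A y /\ forall w, tmbullet t s w < y w.

(* Main.v *)
Require Import Defs.
From HB Require Import structures.
From mathcomp Require Import all_boot all_order all_algebra finmap.
From mathcomp Require Import boolp classical_sets functions cardinality fsbigop reals.
From mathcomp Require Import ring lra.
Import Order.TTheory GRing.Theory Num.Theory.
Set Implicit Arguments. Unset Strict Implicit. Unset Printing Implicit Defensive.
Local Open Scope ring_scope.

Section Alt.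
Variable R : realType.
Variable W : eqType.

Definition cone (I : finType) (M : I -> W -> R) (f : W -> R) :=
  exists q : I -> R, (forall i, 0 <= q i) /\ forall w, f w = \sum_i q i * M i w.

Lemma cone_comb (I J : finType) (M : I -> W -> R) (N : J -> W -> R) (c : J -> R) :
  (forall j, 0 <= c j) -> (forall j, cone M (N j)) ->
  cone M (fun w => \sum_j c j * N j w).
Proof.
move=> c0 hN.
have [qf hqf] := choice hN.
exists (fun i => \sum_j c j * qf j i); split.
  by move=> i; apply: sumr_ge0 => j _; apply: mulr_ge0 => //; case: (hqf j).
move=> w.
under eq_bigr => j _ do rewrite (proj2 (hqf j)) mulr_sumr.
rewrite exchange_big /=; apply: eq_bigr => i _.
by rewrite mulr_suml; apply: eq_bigr => j _; rewrite mulrA.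
Qed.

Lemma cone_row (I : finType) (M : I -> W -> R) i : cone M (M i).
Proof.
exists (fun k => (k == i)%:R); split; first by move=> k; rewrite ler0n.
move=> w; rewrite (bigD1 i) //= eqxx mul1r big1 ?addr0 // => k /negbTE ->.
by rewrite mul0r.
Qed.

Lemma cone0 (I : finType) (M : I -> W -> R) : cone M (fun _ => 0).
Proof.
by exists (fun _ => 0); split => // w; rewrite big1 // => i _; rewrite mul0r.
Qed.

Lemma cone_ext (I : finType) (M : I -> W -> R) f g :
  (forall w, f w = g w) -> cone M f -> cone M g.
Proof. by move=> e [q [q0 hq]]; exists q; split => // w; rewrite -e. Qed.

Lemma cone_lin2 (I : finType) (M : I -> W -> R) f g a b :
  0 <= a -> 0 <= b -> cone M f -> cone M g -> cone M (fun w => a * f w + b * g w).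
Proof.
move=> a0 b0 cf cg.
have := @cone_comb I bool M (fun x => if x then f else g) (fun x => if x then a else b).
move=> /(_ _ _); case.
- by case.
- by case.
move=> q [q0 hq]; exists q; split => // w; rewrite -hq.
by rewrite big_bool /= addrC.
Qed.

Lemma term_le_sum (ws : seq W) (F : W -> R) :
  (forall w, 0 <= F w) -> all (fun w => F w <= \sum_(v <- ws) F v) ws.
Proof.
move=> F0; elim: ws => [|w ws IH] //=; rewrite big_cons; apply/andP; split.
  by rewrite lerDl sumr_ge0.
by apply: sub_all IH => v /= h; apply: (le_trans h); rewrite lerDr.
Qed.

Definition altA (I : finType) (M : I -> W -> R) (ws : seq W) :=
  exists f, cone M f /\ all (fun w => 0 < f w) ws.
Definition altB (I : finType) (M : I -> W -> R) (ws : seq W) :=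
  exists p : seq R, [/\ size p = size ws, all (fun x => 0 <= x) p, 0 < \sum_(x <- p) x &
     forall i, \sum_(x <- zip p ws) x.1 * M i x.2 <= 0].

Lemma sum_zip_nseq0 (ws : seq W) (F : W -> R) :
  \sum_(x <- zip (nseq (size ws) 0) ws) x.1 * F x.2 = 0.
Proof. by elim: ws => [|w ws IH]; rewrite ?big_nil //= big_cons IH mul0r addr0. Qed.

Lemma alt ws : forall (I : finType) (M : I -> W -> R), altA M ws \/ altB M ws.
Proof.
elim: ws => [|w0 ws IH] I M.
  by left; exists (fun _ => 0); split => //; apply: cone0.
case: (pselect (exists i0, 0 < M i0 w0)) => [[i0 hi0]|hno]; last first.
  right; exists (1 :: nseq (size ws) 0); split.
  - by rewrite /= size_nseq.
  - by rewrite /= ler01 /=; elim: (size ws) => //= n ->; rewrite lexx.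
  - rewrite big_cons big1_seq ?addr0 ?ltr01 // => x /andP [_ /nseqP [-> _]] //.
  - move=> i /=; rewrite big_cons /= sum_zip_nseq0 addr0 mul1r.
    by rewrite leNgt; apply/negP => h; apply: hno; exists i.
pose M' : (I + (I * I))%type -> W -> R := fun k =>
  match k with
  | inl i => if 0 <= M i w0 then M i else (fun _ => 0)
  | inr ij => if (0 < M ij.1 w0) && (M ij.2 w0 < 0) then
      (fun w => - M ij.2 w0 * M ij.1 w + M ij.1 w0 * M ij.2 w) else (fun _ => 0)
  end.
have coneM' : forall k, cone M (M' k).
  case=> [i|[i j]] /=; case: ifP => h.
  - exact: cone_row.
  - exact: cone0.
  - move/andP: h => [h1 h2].
    by apply: cone_lin2; [lra|lra|apply: cone_row|apply: cone_row].
  - exact: cone0.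
have M'w0 : forall k, 0 <= M' k w0.
  case=> [i|[i j]] /=; case: ifP => h //.
  by rewrite mulrC mulrN addNr.
case: (IH _ M') => [[f [[q' [q'0 hf]] fpos]]|[p' [sz p'0 p'pos hp']]].
-
  have fcone : cone M f.
    apply: (cone_ext (f := fun w => \sum_k q' k * M' k w)); first by move=> w; rewrite hf.
    exact: cone_comb.
  have fw0 : 0 <= f w0 by rewrite hf; apply: sumr_ge0 => k _; apply: mulr_ge0.
  set g := M i0.
  pose K := 1 + \sum_(v <- ws) `|g v| / `|f v|.
  have K0 : 0 <= \sum_(v <- ws) `|g v| / `|f v|.
    by apply: sumr_ge0 => v _; apply: divr_ge0.
  left; exists (fun w => K * f w + 1 * g w); split.
    by apply: cone_lin2 => //; [rewrite /K; lra | apply: cone_row].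
  rewrite /= mul1r; apply/andP; split.
    have : 0 <= K * f w0 by apply: mulr_ge0 => //; rewrite /K; lra.
    rewrite /g; lra.
  apply/allP => w win.
  have fw : 0 < f w by move/allP: fpos => /(_ w win).
  have := term_le_sum ws (F := fun v => `|g v| / `|f v|) (fun v => divr_ge0 (normr_ge0 _) (normr_ge0 _)).
  move/allP => /(_ w win) /=; set S := \sum_(v <- ws) _ => hT.
  have e : `|g w| / `|f w| * f w = `|g w|.
    by rewrite (gtr0_norm fw) divfK // gt_eqF.
  have : `|g w| / `|f w| * f w <= S * f w by apply: ler_wpM2r => //; apply: ltW.
  rewrite e /K -/S mulrDl !mul1r => h.
  have : - g w <= `|g w| by rewrite -normrN ler_norm.
  lra.
-
  pose S i := \sum_(x <- zip p' ws) x.1 * M i x.2.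
  have Spos : forall i, 0 <= M i w0 -> S i <= 0.
    move=> i hi; have := hp' (inl i); rewrite /= hi.
    by [].
  have Spair : forall i j, 0 < M i w0 -> M j w0 < 0 ->
      - M j w0 * S i + M i w0 * S j <= 0.
    move=> i j hi hj; have := hp' (inr (i, j)); rewrite /= hi hj /=.
    rewrite /S !mulr_sumr -big_split /=.
    congr (_ <= _); apply: eq_bigr => x _; lra.
  pose tt i := - S i / M i w0.
  case: (Order.TotalTheory.arg_minP tt (P := fun i => 0 < M i w0) hi0) => i1 hi1 hmin.
  have p00 : 0 <= tt i1 by apply: divr_ge0; [rewrite oppr_ge0; apply: Spos; apply: ltW|apply: ltW].
  right; exists (tt i1 :: p'); split.
  - by rewrite /= sz.
  - by rewrite /= p00.
  - by rewrite big_cons; apply: ltr_wpDl.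
  move=> i; rewrite big_cons /= -/(S i).
  case: (ltgtP 0 (M i w0)) => hi.
  + have := hmin i hi; rewrite /tt ler_pdivlMr //.
    rewrite /tt => h; lra.
  + have := Spair i1 i hi1 hi => h.
    rewrite -(pmulr_rle0 _ hi1) mulrDr /tt.
    have -> : M i1 w0 * (- S i1 / M i1 w0 * M i w0) = - S i1 * M i w0.
      by field; rewrite gt_eqF.
    lra.
  + by rewrite -hi mulr0 add0r; apply: Spos; rewrite hi.
Qed.
End Alt.

Section Main.
Variables (R : realType) (P : Type) (T F : P) (Omega : Type).
Variable (t : lform P -> set Omega).
Hypothesis ht : truth_valuation T F t.
Hypothesis hsound : sound T F t.

Local Open Scope classical_set_scope.

Lemma t_or phi psi : t (Or phi psi) = t phi `|` t psi.
Proof.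
have e : lequiv T F (Or phi psi) (Neg (And (Neg phi) (Neg psi))).
  by split => v _ /=; case: (beval v phi); case: (beval v psi).
case: hsound => hex _ hneg hand.
by rewrite (hex _ _ e) hneg hand !hneg setCI !setCK.
Qed.

Lemma shannon (L : seq (lform P)) (G : seq bool -> bool) :
  exists psi, t psi = [set w | G (map (fun phi => w \in t phi) L)].
Proof.
case: hsound => hex _ hneg hand.
elim: L G => [|phi L IH] G.
  case hG: (G [::]).
    exists (Var T); rewrite (proj1 ht); apply/seteqP; split => w //=; rewrite hG.
  exists (Var F); rewrite (proj2 ht); apply/seteqP; split => w //=; rewrite hG.
have [p1 h1] := IH (fun bs => G (true :: bs)).
have [p0 h0] := IH (fun bs => G (false :: bs)).
exists (Or (And phi p1) (And (Neg phi) p0)); rewrite t_or !hand hneg h1 h0.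
apply/seteqP; split => w /=; case: (boolP (w \in t phi)) => hw.
- have hw' : t phi w by rewrite -in_setE.
  by case => -[] // /(_ hw').
- have hw' : ~ t phi w by move=> h; move/negP: hw; apply; rewrite in_setE.
  by case => -[] // /hw'.
- have hw' : t phi w by rewrite -in_setE.
  by move=> h; left.
- have hw' : ~ t phi w by move=> h; move/negP: hw; apply; rewrite in_setE.
  by move=> h; right.
Qed.

Lemma sum_zip_map (L : seq (lform P)) (z : lform P -> R) (f : lform P -> bool) :
  \sum_(x <- zip L (map f L)) z x.1 * (x.2)%:R = \sum_(phi <- L) z phi * (f phi)%:R.
Proof. by elim: L => [|phi L IH]; rewrite ?big_nil //= !big_cons IH. Qed.

Lemma superlevel (z : lform P -> R) (a : R) : strategy z ->
  exists psi, t psi = [set w | a <= tcirc t z w].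
Proof.
move=> hz.
have [psi hpsi] := shannon (fset_set [set phi | z phi != 0])
   (fun bs => a <= \sum_(x <- zip (fset_set [set phi | z phi != 0]) bs) z x.1 * (x.2)%:R).
exists psi; rewrite hpsi; apply/seteqP; split => w /=;
  by rewrite /tcirc fsbig_finite // sum_zip_map.
Qed.

Lemma layer_sum_sum (I : Type) (D : seq I) (c : I -> R) (h : I -> set Omega -> R)
   (x : Omega -> R) vs :
  layer_sum (fun B => \sum_(i <- D) c i * h i B) x vs =
  \sum_(i <- D) c i * layer_sum (h i) x vs.
Proof.
elim: vs => [|a vs IH] /=; first by rewrite big1 // => i _; rewrite mulr0.
rewrite IH mulr_sumr -big_split; apply: eq_bigr => i _ /=.
by rewrite mulrDr mulrCA.
Qed.

Lemma layer_sum_scale (c : R) g (x : Omega -> R) vs :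
  layer_sum (fun B => c * g B) x vs = c * layer_sum g x vs.
Proof. by elim: vs => [|a vs IH] /=; rewrite ?mulr0 // IH mulrDr mulrCA. Qed.

Lemma layer_sum_congr (g g' : set Omega -> R) (x : Omega -> R) vs :
  (forall a, a \in vs -> g [set w | a <= x w] = g' [set w | a <= x w]) ->
  layer_sum g x vs = layer_sum g' x vs.
Proof.
elim: vs => [|a vs IH] //= h.
have h' : forall b, b \in vs -> g [set w | b <= x w] = g' [set w | b <= x w].
  by move=> b hb; apply: h; rewrite in_cons hb orbT.
by rewrite h ?mem_head // IH.
Qed.


Fixpoint pdist (lams : seq R) : seq (R * seq bool) :=
  match lams with
  | [::] => [:: (1, [::])]
  | l :: ls => [seq (l * x.1, true :: x.2) | x <- pdist ls] ++
               [seq ((1 - l) * x.1, false :: x.2) | x <- pdist ls]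
  end.

Definition Ex (lams : seq R) (h : seq bool -> R) :=
  \sum_(x <- pdist lams) x.1 * h x.2.

Lemma Ex_cons l ls h :
  Ex (l :: ls) h = l * Ex ls (fun bs => h (true :: bs)) + (1 - l) * Ex ls (fun bs => h (false :: bs)).
Proof.
rewrite /Ex /= big_cat !big_map /= !mulr_sumr.
by congr (_ + _); apply: eq_bigr => x _; rewrite mulrA.
Qed.

Lemma Ex_const lams c : Ex lams (fun _ => c) = c.
Proof.
elim: lams => [|l ls IH]; first by rewrite /Ex /= big_cons big_nil mul1r addr0.
by rewrite Ex_cons !IH; ring.
Qed.

Lemma Ex_nth lams k : (k < size lams)%N ->
  Ex lams (fun bs => (nth false bs k)%:R) = nth 0 lams k.
Proof.
elim: lams k => [|l ls IH] [|k] //= hk.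
  by rewrite Ex_cons /= !Ex_const; ring.
by rewrite Ex_cons /= IH //; ring.
Qed.

Lemma Ex_pos lams h : all (fun l => 0 <= l <= 1) lams -> (forall bs, 0 < h bs) -> 0 < Ex lams h.
Proof.
elim: lams h => [|l ls IH] h /=.
  by move=> _ hh; rewrite /Ex /= big_cons big_nil mul1r addr0.
move=> /andP [/andP [l0 l1] hls] hh; rewrite Ex_cons.
have A := IH (fun bs => h (true :: bs)) hls (fun bs => hh _).
have B := IH (fun bs => h (false :: bs)) hls (fun bs => hh _).
case: (ltgtP l 0) => hl; first by lra.
  have : 0 < l * Ex ls (fun bs => h (true :: bs)) by apply: mulr_gt0.
  have : 0 <= (1 - l) * Ex ls (fun bs => h (false :: bs)) by apply: mulr_ge0; lra.
  lra.
by rewrite hl mul0r add0r subr0 mul1r.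
Qed.

Fixpoint allbits (n : nat) : seq (seq bool) :=
  if n is n'.+1 then [seq b :: bs | b <- [:: true; false], bs <- allbits n'] else [:: [::]].

Lemma allbitsP bs : bs \in allbits (size bs).
Proof.
elim: bs => [|b bs IH] //=.
by case: b; rewrite !mem_cat ?(mem_map (fun x y => (f_equal (@behead _) : x = y))) ?map_f ?orbT.
Qed.

Hypothesis w0 : Omega.

Definition est (C : seq (set Omega)) (bs : seq bool) : Omegam t :=
  fun b => nth false bs (index (sval b) C).

Lemma tmS_est C bs B : mindex t B -> (tmS t B (est C bs) <-> nth false bs (index B C)).
Proof.
move=> hm; have [_ [nT n0]] := hm; rewrite /tmS; split.
  by case => // -[_ [h]].
by move=> h; right; split => //; exists hm.
Qed.

Lemma tmS_nonm B w : ~ mindex t B -> (tmS t B w <-> B = setT).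
Proof. by move=> hm; split; [case => // -[_ [h]] | left]. Qed.

Lemma memE (X : Type) (A : set X) w (b : bool) : (A w <-> b) -> (w \in A) = b.
Proof. by move=> h; apply/idP/idP; rewrite in_setE; apply h. Qed.

Lemma setT_ne0 : (setT : set Omega) <> set0.
Proof. by move=> h; have : (setT : set Omega) w0 by []; rewrite h. Qed.

Lemma memE' (X : Type) (A : set X) w (Q : Prop) : (A w <-> Q) -> (w \in A) = `[< Q >].
Proof. by move=> h; apply/idP/idP; rewrite in_setE => H; [apply/asboolP; apply h | apply h; apply/asboolP]. Qed.

Definition Cof (zs : seq (lform P -> R)) : seq (set Omega) :=
  flatten [seq [seq [set w | a <= tcirc t z w] | a <- values (tcirc t z)] | z <- zs].

Lemma Cin zs z a : z \in zs -> a \in values (tcirc t z) -> [set w | a <= tcirc t z w] \in Cof zs.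
Proof. by move=> hz ha; apply/flatten_mapP; exists z => //; apply: map_f. Qed.

Lemma dir1 (A : set (lform P -> R)) s : A `<=` @strategy R P -> A s ->
  rationalizable t A s -> pointwise_undominated t A s.
Proof.
move=> hAS hs [lam [[l0 l1 lb] hbest]] [y [[l [hl hl1 hy]] hdom]].
set zs := s :: map fst l.
have zsA : forall z, z \in zs -> A z.
  move=> z; rewrite in_cons => /orP [/eqP -> // | /mapP [p hp ->]]; exact: (hl p hp).1.
set C := Cof zs.
have CL : forall B, B \in C -> exists phi, t phi = B.
  move=> B /flatten_mapP [z hz /mapP [a _ ->]]; exact: superlevel (hAS _ (zsA _ hz)).
set lams := map lam C.
have hlams : all (fun l => 0 <= l <= 1) lams.
  apply/allP => x /mapP [B hB ->]; have [phi <-] := CL B hB; exact: lb.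
have marg : forall B, B \in C -> Ex lams (fun bs => ((est C bs) \in tmS t B)%:R) = lam B.
  move=> B hB; case: (pselect (mindex t B)) => hm.
    have -> : (fun bs => ((est C bs) \in tmS t B)%:R) = (fun bs => (nth false bs (index B C))%:R :> R).
      by apply: funext => bs; rewrite (memE (tmS_est C bs hm)).
    by rewrite Ex_nth ?size_map ?index_mem // (nth_map set0) ?index_mem // nth_index.
  have -> : (fun bs => ((est C bs) \in tmS t B)%:R) = (fun _ => (`[< B = setT >])%:R :> R).
    by apply: funext => bs; rewrite (memE' (tmS_nonm _ hm)).
  rewrite Ex_const; case: (pselect (B = setT)) => [->|hT]; first by rewrite asboolT // l1.
  rewrite asboolF //.
  have [phi hphi] := CL B hB.
  case: (pselect (B = set0)) => [->|h0]; first by rewrite l0.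
  by exfalso; apply: hm; split; [exists phi|split].
have Echo : forall z, z \in zs -> Ex lams (fun bs => tmbullet t z (est C bs)) = choquet lam (tcirc t z).
  move=> z hz; rewrite /Ex /tmbullet.
  rewrite -(layer_sum_sum (pdist lams) fst (fun x B => ((est C x.2) \in tmS t B)%:R)).
  rewrite /choquet; apply: layer_sum_congr => a ha.
  exact: (marg _ (Cin hz ha)).
have pos := Ex_pos (h := fun bs => y (est C bs) - tmbullet t s (est C bs)) hlams
   (fun bs => ltac:(by rewrite subr_gt0 hdom)).
have ExB : forall h1 h2, Ex lams (fun bs => h1 bs - h2 bs) = Ex lams h1 - Ex lams h2.
  by move=> h1 h2; rewrite /Ex -sumrB; apply: eq_bigr => x _; rewrite mulrBr.
have Exy : Ex lams (fun bs => y (est C bs)) =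
    \sum_(p <- l) p.2 * Ex lams (fun bs => tmbullet t p.1 (est C bs)).
  rewrite /Ex; under eq_bigr => x _ do rewrite hy mulr_sumr.
  rewrite exchange_big /=; apply: eq_bigr => p _; rewrite mulr_sumr.
  by apply: eq_bigr => x _; rewrite mulrCA.
move: pos; rewrite (ExB (fun bs => y (est C bs))) Exy Echo ?mem_head //.
have : \sum_(p <- l) p.2 * Ex lams (fun bs => tmbullet t p.1 (est C bs)) <= choquet lam (tcirc t s).
  rewrite -[X in _ <= X]mul1r -hl1 mulr_suml big_seq [X in _ <= X]big_seq.
  apply: ler_sum => p hp; rewrite Echo; last by rewrite in_cons map_f ?orbT.
  by apply: ler_wpM2l; [exact: (hl p hp).2 | exact: hbest (hl p hp).1].
lra.
Qed.

Lemma dir2 (A : set (lform P -> R)) s : finite_set A -> A s ->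
  pointwise_undominated t A s -> rationalizable t A s.
Proof.
move=> hAfin hs hund.
have [sA hA] := (finite_seqP A).1 hAfin.
set n := size sA.
set zs := s :: sA.
set C := Cof zs.
set ws := map (est C) (allbits (size C)).
pose g (i : 'I_n) := nth s sA i.
pose M (i : 'I_n) (w : Omegam t) := tmbullet t (g i) w - tmbullet t s w.
have gin : forall i : 'I_n, g i \in zs by move=> i; rewrite in_cons mem_nth ?orbT.
have cover : forall w : Omegam t, exists2 w', w' \in ws &
    forall z, z \in zs -> tmbullet t z w' = tmbullet t z w.
  move=> w; set bs := [seq `[< tmS t B w >] | B <- C]; exists (est C bs).
    by apply: map_f; have := allbitsP bs; rewrite size_map.
  move=> z hz; rewrite /tmbullet; apply: layer_sum_congr => a ha.
  have hB := Cin hz ha; move: hB; set B := [set w | a <= _] => hB.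
  congr (_%:R); case: (pselect (mindex t B)) => hm.
    by rewrite (memE (tmS_est C bs hm)) (nth_map set0) ?index_mem // nth_index.
  by rewrite (memE' (tmS_nonm (est C bs) hm)) (memE' (tmS_nonm w hm)).
case: (alt ws M) => [[f [[q [q0 hq]] fpos]] | [p [sz p0 ppos hp]]].
- exfalso; apply: hund.
  set Q := \sum_i q i.
  have key : forall w, 0 < \sum_i q i * (tmbullet t (g i) w - tmbullet t s w).
    move=> w; have [w' hw' e] := cover w.
    have := allP fpos w' hw'; rewrite hq /M.
    have -> : \sum_i q i * (tmbullet t (g i) w' - tmbullet t s w') =
              \sum_i q i * (tmbullet t (g i) w - tmbullet t s w).
      by apply: eq_bigr => i _; rewrite !e ?gin ?mem_head.
    by [].
  have Q0 : 0 < Q.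
    have Qge : 0 <= Q by rewrite /Q; apply: sumr_ge0 => i _; exact: q0.
    case: (ltgtP Q 0) => [hQ|//|hQ0]; first by rewrite leNgt hQ in Qge.
    exfalso; have := key (fun _ => false); rewrite big1 ?ltxx // => i _.
    by rewrite (psumr_eq0P (fun i _ => q0 i) hQ0) // mul0r.
  exists (fun w => \sum_i (q i / Q) * tmbullet t (g i) w); split.
    exists [seq (g i, q i / Q) | i <- index_enum 'I_n]; split.
    - move=> x /mapP [i _ ->] /=; split; last by apply: divr_ge0 => //; apply: ltW.
      by rewrite hA /=; apply: mem_nth.
    - by rewrite big_map /= -mulr_suml divff // gt_eqF.
    - by move=> w; rewrite big_map.
  move=> w; have hk := key w.
  have e1 : \sum_i q i * (tmbullet t (g i) w - tmbullet t s w) =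
      \sum_i q i * tmbullet t (g i) w - Q * tmbullet t s w.
    by rewrite /Q mulr_suml -sumrB; apply: eq_bigr => i _; rewrite mulrBr.
  have e2 : \sum_i q i / Q * tmbullet t (g i) w = (\sum_i q i * tmbullet t (g i) w) / Q.
    by rewrite mulr_suml; apply: eq_bigr => i _; rewrite mulrAC.
  by rewrite e2 ltr_pdivlMr //; move: hk; rewrite e1 subr_gt0 mulrC.
- set Pt := \sum_(x <- p) x.
  set D := zip p ws.
  have D1 : \sum_(x <- D) x.1 = Pt.
    by rewrite -(big_map fst predT id) -/(unzip1 D) unzip1_zip ?sz.
  have Dpos : forall x, x \in D -> 0 <= x.1.
    move=> x hx; have : x.1 \in unzip1 D by apply: map_f.
    by rewrite unzip1_zip ?sz // => /(allP p0).
  pose num B := \sum_(x <- D) x.1 * (x.2 \in tmS t B)%:R.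
  pose lam B := Pt^-1 * num B.
  have Ptne : Pt != 0 by rewrite gt_eqF.
  exists lam; split.
  - split.
    + have hf : forall w, (w \in tmS t set0) = false.
        move=> w; apply: memE; split => // -[h|[h _]]; last by exfalso; apply: h.
        by exfalso; apply: setT_ne0; rewrite h.
      rewrite /lam /num big1 ?mulr0 // => x _.
      by rewrite hf mulr0.
    + have htr : forall w, (w \in tmS t setT) = true.
        by move=> w; apply: memE; split => // _; left.
      rewrite /lam /num; under eq_bigr => x _ do rewrite htr mulr1.
      by rewrite D1 mulVf.
    + move=> phi; apply/andP; split.
        apply: mulr_ge0; first by rewrite invr_ge0 ltW.
        by rewrite /num big_seq; apply: sumr_ge0 => x hx; apply: mulr_ge0; [exact: Dpos|].
      rewrite /lam mulrC ler_pdivrMr // mul1r -D1 /num big_seq [X in _ <= X]big_seq.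
      apply: ler_sum => x hx; case: (_ \in _); rewrite ?mulr1 ?mulr0 //; exact: Dpos.
  - move=> s' hs'; rewrite hA /= in hs'.
    have hi : (index s' sA < n)%N by rewrite index_mem.
    have key : forall z, \sum_(x <- D) x.1 * tmbullet t z x.2 = Pt * choquet lam (tcirc t z).
      move=> z; rewrite /choquet /lam layer_sum_scale mulrA mulfV // mul1r /tmbullet.
      by rewrite -(layer_sum_sum D fst (fun x B => (x.2 \in tmS t B)%:R)).
    have := hp (Ordinal hi); rewrite /M.
    under eq_bigr => x _ do rewrite mulrBr.
    rewrite sumrB !key -mulrBr pmulr_rle0 // subr_le0 /g /= nth_index //.
Qed.

End Main.

Local Open Scope classical_set_scope.
Theorem proposition10 (R : realType) (P : Type) (T F : P) (Omega : Type)
  (w0 : Omega) (t : lform P -> set Omega)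
  (ht : truth_valuation T F t) (hsound : sound T F t)
  (A : set (lform P -> R)) (hAfin : finite_set A) (hAS : A `<=` @strategy R P)
  (s : lform P -> R) (hs : A s) :
  rationalizable t A s <-> pointwise_undominated t A s.
Proof.
split; [exact: (dir1 ht hsound hAS hs) | exact: (dir2 w0 hAfin hs)].
Qed.
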